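(* For fixed integers $2\le j\le n$ and every $d\in\{1,\dots,n-j+1\}$, $$\mathbb{P}(D_{n,j}=d)=\frac{\Gamma(d)\Gamma\!\left(j-\tfrac12\right)}{\Gamma\!\left(n-\tfrac12\right)}\left(\frac{\Gamma(n-1)\;{}_3F_2\!\left(\tfrac{2-d}{2},\tfrac{1-d}{2},2-j;\tfrac12,2-n;1\right)}{\Gamma(d)\,\Gamma(j-1)}-\frac{\Gamma\!\left(n-\tfrac32\right)\;{}_3F_2\!\left(\tfrac{3-d}{2},\tfrac{2-d}{2},\tfrac52-j;\tfrac32,\tfrac52-n;1\right)}{\Gamma(d-1)\,\Gamma\!\left(j-\tfrac32\right)}\right),$$ where $1/\Gamma(0)=0$ (so the second term vanishes for $d=1$) and each ${}_3F_2$ is the terminating finite sum obtained because one of its numerator parameters is a nonpositive integer (the sum stops before any denominator Pochhammer symbol vanishes).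
   Context: A plane-oriented recursive tree (PORT) is the random sequence of trees $(T_n)_{n\ge1}$ defined as follows. $T_1$ is a single node labeled $1$ (the root). For $n\ge2$, $T_n$ is obtained from $T_{n-1}$ by adding a node labeled $n$ and an edge joining it to a node $i\in\{1,\dots,n-1\}$ of $T_{n-1}$, where, conditionally on $T_1,\dots,T_{n-1}$, node $i$ is chosen with probability $(c_{n-1,i}+1)/(2n-3)$, with $c_{n-1,i}$ the number of children of $i$ in $T_{n-1}$. $D_{n,j}$ denotes the degree of the node labeled $j$ in $T_n$. The generalized hypergeometric function is ${}_pF_q(a_1,\dots,a_p;b_1,\dots,b_q;z)=\sum_{s\ge0}\frac{\langle a_1\rangle_s\cdots\langle a_p\rangle_s}{\langle b_1\rangle_s\cdots\langle b_q\rangle_s}\frac{z^s}{s!}$, where $\langle x\rangle_s=x(x+1)\cdots(x+s-1)$, $\langle x\rangle_0=1$. *)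

(* Defs.v *)
From Stdlib Require Import Reals List Arith.
Import ListNotations.
Open Scope R_scope.

(* ---------- The PORT process as an explicit finite probability space ----------
   An outcome of (T_1,...,T_{m+1}) is the list of parents [p_2; ...; p_{m+1}]
   where p_k is the node to which node k attaches. *)

Definition children (ps : list nat) (i : nat) : nat := count_occ Nat.eq_dec ps i.

(* port_paths m = all parent lists of T_{m+1} with their probabilities. *)
Fixpoint port_paths (m : nat) : list (list nat * R) :=
  match m with
  | O => [([], 1)]
  | S m' =>
      (* adding node k = m'+2 to T_{k-1} = T_{m'+1}, nodes 1..m'+1,
         denominator 2k-3 = 2m'+1 *)
      flat_map (fun pp : list nat * R =>
        let (ps, p) := pp in
        map (fun i => (ps ++ [i],
                       p * ((INR (children ps i) + 1) / INR (2 * m' + 1))))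
            (seq 1 (m' + 1)))
        (port_paths m')
  end.

Definition degree (ps : list nat) (j : nat) : nat :=
  children ps j + (if Nat.eqb j 1 then 0 else 1).

Definition prob_deg (n j d : nat) : R :=
  fold_right Rplus 0
    (map (fun pp : list nat * R =>
            if Nat.eqb (degree (fst pp) j) d then snd pp else 0)
         (port_paths (n - 1))).

(* ---------- Gamma at positive half-integers ----------
   GammaH k = Gamma(k/2) for k >= 1, via Gamma(1/2) = sqrt pi, Gamma(1) = 1
   and Gamma(x+1) = x Gamma(x).  (GammaH 0 is a pole; value irrelevant.) *)
Fixpoint GammaH (k : nat) : R :=
  match k with
  | O => 0
  | S O => sqrt PI
  | S (S O) => 1
  | S (S k' as k1) => (INR k' / 2) * GammaH k'
  end.

(* 1 / Gamma(k/2), with the convention 1/Gamma(0) = 0 *)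
Definition rGammaH (k : nat) : R :=
  match k with O => 0 | _ => / GammaH k end.

Fixpoint poch (x : R) (s : nat) : R :=
  match s with
  | O => 1
  | S s' => poch x s' * (x + INR s')
  end.

Definition F32 (N : nat) (a1 a2 a3 b1 b2 z : R) : R :=
  sum_f_R0 (fun s => poch a1 s * poch a2 s * poch a3 s
                     / (poch b1 s * poch b2 s) * z ^ s / INR (fact s)) N.

(* Main.v *)
Require Import Defs.
From Stdlib Require Import Reals.
From Stdlib Require Import List Arith Lia Lra.
Import ListNotations.
Open Scope R_scope.

Definition rsum {A} (l : list A) (f : A -> R) : R := fold_right Rplus 0 (map f l).

Lemma rsum_app {A} (l1 l2 : list A) f : rsum (l1++l2) f = rsum l1 f + rsum l2 f.
Proof. unfold rsum; induction l1; simpl; [ring|rewrite IHl1; ring]. Qed.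

Lemma rsum_flat_map {A B} (h : A -> list B) l f :
  rsum (flat_map h l) f = rsum l (fun x => rsum (h x) f).
Proof. induction l; simpl; [reflexivity|]. rewrite rsum_app, IHl. unfold rsum; simpl; ring. Qed.

Lemma rsum_map {A B} (h : A -> B) l f : rsum (map h l) f = rsum l (fun x => f (h x)).
Proof. unfold rsum; rewrite map_map; reflexivity. Qed.

Lemma rsum_ext_in {A} (l : list A) f g : (forall x, In x l -> f x = g x) -> rsum l f = rsum l g.
Proof. intro H; induction l; simpl; [reflexivity|]. unfold rsum in *; simpl.
  rewrite H by (left; auto). rewrite IHl by (intros; apply H; right; auto). reflexivity. Qed.

Lemma rsum_plus {A} (l : list A) f g : rsum l (fun x => f x + g x) = rsum l f + rsum l g.
Proof. unfold rsum; induction l; simpl; [ring|rewrite IHl; ring]. Qed.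

Lemma rsum_scal {A} (l : list A) c f : rsum l (fun x => c * f x) = c * rsum l f.
Proof. unfold rsum; induction l; simpl; [ring|rewrite IHl; ring]. Qed.

Lemma rsum_cons {A} (x:A) l f : rsum (x::l) f = f x + rsum l f.
Proof. reflexivity. Qed.

Lemma rsum_zero {A} (l : list A) : rsum l (fun _ => 0) = 0.
Proof. induction l; [reflexivity|]. rewrite rsum_cons, IHl; ring. Qed.

Lemma rsum_seq_ind a L j c : (a <= j < a + L)%nat ->
  rsum (seq a L) (fun i => if Nat.eqb i j then c else 0) = c.
Proof.
  revert a; induction L; intros a H; [lia|]. simpl seq. rewrite rsum_cons.
  destruct (Nat.eqb_spec a j).
  - subst. rewrite (rsum_ext_in (seq (S j) L) _ (fun _ => 0)).
    + rewrite rsum_zero. ring.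
    + intros x Hx. apply in_seq in Hx. destruct (Nat.eqb_spec x j); [lia|auto].
  - rewrite IHL by lia. ring.
Qed.

Lemma rsum_seq_const a L c : rsum (seq a L) (fun _ => c) = INR L * c.
Proof. revert a; induction L; intro a; [unfold rsum; simpl; ring|]. simpl seq; rewrite rsum_cons, IHL. rewrite S_INR. ring. Qed.

Lemma children_cons x ps i : INR (children (x::ps) i) = (if Nat.eqb i x then 1 else 0) + INR (children ps i).
Proof. unfold children; simpl. destruct (Nat.eq_dec x i); destruct (Nat.eqb_spec i x); subst; try lia.
  - rewrite S_INR; ring.
  - ring. Qed.

Lemma rsum_children ps a L : (forall x, In x ps -> a <= x < a + L)%nat ->
  rsum (seq a L) (fun i => INR (children ps i)) = INR (length ps).
Proof.
  induction ps as [|x ps IH]; intro H.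
  - simpl. unfold children. simpl. rewrite (rsum_seq_const a L 0). ring.
  - rewrite (rsum_ext_in _ _ (fun i => (if Nat.eqb i x then 1 else 0) + INR (children ps i))).
    2:{ intros; apply children_cons. }
    rewrite rsum_plus, rsum_seq_ind, IH. simpl length. rewrite S_INR; ring.
    + intros; apply H; right; auto.
    + apply H; left; auto.
Qed.

Lemma children_app ps i j : children (ps ++ [i]) j = (children ps j + (if Nat.eqb i j then 1 else 0))%nat.
Proof. unfold children. rewrite count_occ_app. simpl. destruct (Nat.eq_dec i j); destruct (Nat.eqb_spec i j); lia. Qed.

Lemma paths_inv m : forall pp, In pp (port_paths m) ->
  length (fst pp) = m /\ (forall x, In x (fst pp) -> 1 <= x <= m)%nat.
Proof.
  induction m; intros pp H.
  - simpl in H. destruct H as [<-|[]]. simpl. split; auto. intros _ [].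
  - simpl in H. apply in_flat_map in H. destruct H as [[ps p] [Hin H]].
    apply in_map_iff in H. destruct H as [i [<- Hi]]. apply in_seq in Hi.
    destruct (IHm _ Hin) as [Hl Hx]. simpl in *. split.
    + rewrite length_app; simpl; lia.
    + intros x Hx'. apply in_app_or in Hx'. destruct Hx' as [Hx'|[<-|[]]]; [apply Hx in Hx'|]; lia.
Qed.

Definition E (j m : nat) (g : nat -> R) : R :=
  rsum (port_paths m) (fun pp => snd pp * g (children (fst pp) j)).

Lemma E_ext j m g h : (forall c, g c = h c) -> E j m g = E j m h.
Proof. intro H. unfold E. apply rsum_ext_in. intros. rewrite H. reflexivity. Qed.

Lemma E_lin j m a b f h : E j m (fun c => a * f c + b * h c) = a * E j m f + b * E j m h.
Proof. unfold E. rewrite <- !rsum_scal, <- rsum_plus. apply rsum_ext_in. intros; ring. Qed.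

Lemma E_step j m g : (1 <= j <= m + 1)%nat ->
  E j (S m) g = E j m (fun c => (1 - (INR c + 1) / INR (2*m+1)) * g c
                              + (INR c + 1) / INR (2*m+1) * g (S c)).
Proof.
  intro Hj. unfold E. cbn [port_paths]. rewrite rsum_flat_map. apply rsum_ext_in.
  intros [ps p] Hin. destruct (paths_inv _ _ Hin) as [Hl Hx]. simpl in Hl, Hx.
  rewrite rsum_map. cbn [fst snd].
  set (D := INR (2*m+1)). set (c := children ps j).
  assert (HD : D <> 0) by (unfold D; apply not_0_INR; lia).
  rewrite (rsum_ext_in _ _ (fun i => (p / D * g c) * (INR (children ps i) + 1)
      + (if Nat.eqb i j then p / D * (INR c + 1) * (g (S c) - g c) else 0))).
  2:{ intros i Hi. rewrite children_app. destruct (Nat.eqb_spec i j).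
      - subst i. rewrite Nat.add_1_r. fold c. field. auto.
      - rewrite Nat.add_0_r. fold c. field. auto. }
  rewrite rsum_plus, rsum_scal, rsum_plus, rsum_children, rsum_seq_const, rsum_seq_ind by (intros; try apply Hx in H; lia).
  rewrite Hl. unfold D. replace (INR (2*m+1)) with (INR m + INR (m+1)) by (rewrite <- plus_INR; f_equal; lia).
  field. rewrite <- plus_INR. apply not_0_INR. lia.
Qed.

Lemma E_mass j m : E j m (fun _ => 1) = 1.
Proof.
  change (E 1 m (fun _ => 1) = 1). induction m.
  - unfold E, rsum; simpl; ring.
  - rewrite E_step by lia. etransitivity; [|exact IHm]. apply E_ext. intro; ring.
Qed.

Lemma E_base j g : (1 <= j)%nat -> E j (j-1) g = g 0%nat.
Proof.
  intro Hj. transitivity (E j (j-1) (fun _ => g 0%nat)).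
  - unfold E. apply rsum_ext_in. intros [ps p] Hin. destruct (paths_inv _ _ Hin) as [_ Hx].
    simpl in *. replace (children ps j) with 0%nat; auto. symmetry. apply count_occ_not_In.
    intro H; apply Hx in H; lia.
  - transitivity (E j (j-1) (fun c => g 0%nat * 1 + 0 * 1)). apply E_ext; intros; ring.
    rewrite E_lin, E_mass. ring.
Qed.

Definition ind (d c : nat) : R := if Nat.eqb (S c) d then 1 else 0.

Lemma E_ind_step j m d : (1 <= j <= m + 1)%nat -> (1 <= d)%nat ->
  E j (S m) (ind d) = (1 - INR d / INR (2*m+1)) * E j m (ind d)
                      + INR (d-1) / INR (2*m+1) * E j m (ind (d-1)).
Proof.
  intros Hj Hd. rewrite E_step by auto. rewrite <- E_lin. apply E_ext. intro c.
  assert (HD : INR (2*m+1) <> 0) by (apply not_0_INR; lia).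
  unfold ind. destruct (Nat.eqb_spec (S c) d); destruct (Nat.eqb_spec (S (S c)) d);
    destruct (Nat.eqb_spec (S c) (d-1)); try lia.
  - subst d. rewrite S_INR. field. auto.
  - replace (INR (d-1)) with (INR c + 1) by (rewrite <- S_INR; f_equal; lia). field. auto.
  - field. auto.
Qed.

Fixpoint falling (a : R) (k : nat) : R :=
  match k with O => 1 | S k' => a * falling (a - 1) k' end.

Definition Cb (a k : nat) : R := falling (INR a) k / INR (fact k).

Lemma falling_S a k : falling a (S k) = falling a k * (a - INR k).
Proof. revert a; induction k; intro a; simpl; [ring|]. simpl in IHk. rewrite IHk.
  destruct k; simpl; ring. Qed.

Lemma falling_zero a k : (a < k)%nat -> falling (INR a) k = 0.
Proof. revert k; induction a; intros k H; destruct k; try lia; cbn [falling].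
  - simpl; ring.
  - replace (INR (S a) - 1) with (INR a) by (rewrite S_INR; ring). rewrite IHa by lia. ring. Qed.

Lemma Cb_zero a k : (a < k)%nat -> Cb a k = 0.
Proof. intro; unfold Cb; rewrite falling_zero by auto; unfold Rdiv; ring. Qed.

Lemma falling_fact a k : (k <= a)%nat -> falling (INR a) k * INR (fact (a - k)) = INR (fact a).
Proof. revert a; induction k; intros a H.
  - simpl. rewrite Nat.sub_0_r. ring.
  - destruct a; [lia|]. cbn [falling]. replace (INR (S a) - 1) with (INR a) by (rewrite S_INR; ring).
    simpl (S a - S k)%nat. rewrite Rmult_assoc, IHk by lia. rewrite fact_simpl, mult_INR. ring. Qed.

Lemma Cb_C a k : (k <= a)%nat -> Cb a k = C a k.
Proof. intro H. unfold Cb, C. rewrite <- (falling_fact a k H). field.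
  split; apply not_0_INR; apply fact_neq_0. Qed.

Lemma Cb_rec e i : Cb e i * (INR e - INR i) = INR e * Cb (e - 1) i.
Proof.
  destruct e.
  - destruct i; [simpl; unfold Cb; simpl; ring|]. rewrite Cb_zero by lia. simpl; ring.
  - unfold Cb. replace (S e - 1)%nat with e by lia.
    assert (falling (INR (S e)) i * (INR (S e) - INR i) = INR (S e) * falling (INR e) i).
    { rewrite <- falling_S. cbn [falling]. replace (INR (S e) - 1) with (INR e) by (rewrite S_INR; ring). reflexivity. }
    unfold Rdiv. rewrite Rmult_comm, <- Rmult_assoc, (Rmult_comm _ (falling _ _)), H. ring.
Qed.

Lemma sum_tail_zero f a K : (forall i, (a < i)%nat -> f i = 0) -> (a <= K)%nat ->
  sum_f_R0 f K = sum_f_R0 f a.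
Proof. intros H HK. induction K.
  - replace a with 0%nat by lia. reflexivity.
  - destruct (Nat.eq_dec a (S K)). subst; reflexivity.
    simpl. rewrite IHK by lia. rewrite H by lia. ring. Qed.

Lemma alt_binom a K : (a <= K)%nat ->
  sum_f_R0 (fun i => (-1)^i * Cb a i) K = if Nat.eqb a 0 then 1 else 0.
Proof.
  intro H. rewrite (sum_tail_zero _ a) by (auto; intros; rewrite Cb_zero by auto; ring).
  transitivity ((-1 + 1)^a).
  - rewrite binomial. apply sum_eq. intros i Hi. rewrite Cb_C by auto. rewrite pow1. ring.
  - destruct a; simpl; ring.
Qed.

Fixpoint TT (j i m : nat) : R :=
  match m with
  | O => 1
  | S m' => if Nat.leb j (S m') then TT j i m' * (1 - INR i / INR (2*m'+1)) else 1
  end.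

Lemma TT_early j i m : (m < j)%nat -> TT j i m = 1.
Proof. destruct m; simpl; auto. intro. destruct (Nat.leb_spec j (S m)); [lia|auto]. Qed.

Lemma TT_step j i m : (j <= S m)%nat -> TT j i (S m) = TT j i m * (1 - INR i / INR (2*m+1)).
Proof. intro H. simpl. destruct (Nat.leb_spec j (S m)); [auto|lia]. Qed.

Definition Fm j m d K := sum_f_R0 (fun i => (-1)^i * Cb (d-1) i * TT j (S i) m) K.

Lemma claim j K : (1 <= j)%nat -> forall t d, (1 <= d)%nat -> (d - 1 <= K)%nat ->
  E j (j - 1 + t) (ind d) = Fm j (j - 1 + t) d K.
Proof.
  intros Hj t. induction t; intros d Hd HK.
  - rewrite Nat.add_0_r, E_base by auto. unfold Fm.
    rewrite (sum_eq _ (fun i => (-1)^i * Cb (d-1) i)).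
    2:{ intros. rewrite TT_early by lia. ring. }
    rewrite alt_binom by auto. unfold ind. destruct (Nat.eqb_spec 1 d); destruct (Nat.eqb_spec (d-1) 0); auto; lia.
  - rewrite Nat.add_succ_r. set (m := (j - 1 + t)%nat) in *.
    rewrite E_ind_step by lia. rewrite IHt by lia.
    assert (HD : INR (2*m+1) <> 0) by (apply not_0_INR; lia).
    transitivity ((1 - INR d / INR (2 * m + 1)) * Fm j m d K +
       INR (d - 1) / INR (2 * m + 1) * Fm j m (d-1) K).
    + destruct (Nat.eq_dec d 1). { subst. simpl. unfold Rdiv; ring. }
      rewrite IHt by lia. reflexivity.
    + unfold Fm. rewrite !scal_sum, <- sum_plus. apply sum_eq. intros i Hi.
      rewrite TT_step by lia.
      assert (Hc := Cb_rec (d-1) i).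
      rewrite minus_INR in * by lia. rewrite (S_INR i). simpl (INR 1) in *.
      set (X := Cb (d-1) i) in *. set (Y := Cb (d-1-1) i) in *. set (T := TT j (S i) m).
      set (D := INR (2*m+1)) in *.
      assert (HY : Y * (INR d - 1) = X * (INR d - 1 - INR i)) by (rewrite Hc; ring).
      match goal with |- ?r = _ => replace r with ((-1)^i*T/D*(X*(D-INR d) + Y*(INR d - 1))) by (field; auto) end.
      rewrite HY. field. auto.
Qed.

Lemma GH_step k : (1 <= k)%nat -> GammaH (S (S k)) = INR k / 2 * GammaH k.
Proof. destruct k; [lia|]. intros _. reflexivity. Qed.

Lemma GH_pos k : (1 <= k)%nat -> 0 < GammaH k.
Proof.
  induction k as [k IH] using lt_wf_ind. intro Hk.
  destruct k as [|[|[|k]]]; try lia.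
  - simpl. apply sqrt_lt_R0, PI_RGT_0.
  - simpl. lra.
  - rewrite GH_step by lia. apply Rmult_lt_0_compat; [|apply IH; lia].
    apply Rmult_lt_0_compat; [apply lt_0_INR; lia|lra].
Qed.

Lemma GH_nz k : (1 <= k)%nat -> GammaH k <> 0.
Proof. intro; apply Rgt_not_eq, GH_pos; auto. Qed.

Lemma poch_S x s : poch x (S s) = x * poch (x + 1) s.
Proof. revert x; induction s; intro x; [cbn [poch]; simpl; ring|].
  change (poch x (S (S s))) with (poch x (S s) * (x + INR (S s))). rewrite IHs.
  change (poch (x+1) (S s)) with (poch (x+1) s * (x+1+INR s)). rewrite S_INR. ring. Qed.

Lemma poch_nz x s : (forall l, (l < s)%nat -> x + INR l <> 0) -> poch x s <> 0.
Proof. induction s; intro H; cbn [poch]; [lra|]. apply Rmult_integral_contrapositive_currified.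
  apply IHs; intros; apply H; lia. apply H; lia. Qed.

Lemma poch_zero x s l : (l < s)%nat -> x + INR l = 0 -> poch x s = 0.
Proof. induction s; intros H1 H2; [lia|]. cbn [poch]. destruct (Nat.eq_dec l s).
  - subst; rewrite H2; ring.
  - rewrite IHs by (auto; lia). ring. Qed.

Lemma poch_pos x s : 0 < x -> 0 < poch x s.
Proof. intro; induction s; cbn [poch]; [lra|]. apply Rmult_lt_0_compat; auto. pose proof (pos_INR s); lra. Qed.

Lemma poch_half x s : poch (x/2) s * poch ((x+1)/2) s * 4^s = poch x (2*s).
Proof.
  induction s; [simpl; ring|].
  replace (2 * S s)%nat with (S (S (2*s))) by lia. cbn [poch pow].
  rewrite <- IHs. rewrite (S_INR (2*s)), mult_INR. simpl (INR 2). field.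
Qed.

Lemma poch_neg a k : poch (-a) k = (-1)^k * falling a k.
Proof. revert a; induction k; intro a; [simpl; ring|]. rewrite poch_S.
  replace (-a + 1) with (-(a-1)) by ring. rewrite IHk. cbn [falling pow]. ring. Qed.

Lemma poch_1 s : poch 1 s = INR (fact s).
Proof. induction s; cbn [poch]; [simpl; ring|]. rewrite IHs, fact_simpl, mult_INR, S_INR. ring. Qed.

Lemma poch_2 k : poch 2 k = INR (fact (S k)).
Proof. induction k; cbn [poch]; [simpl; ring|]. rewrite IHk, (fact_simpl (S k)), mult_INR, !S_INR. ring. Qed.

Lemma pow_m1_even s : (-1)^(2*s) = 1.
Proof. rewrite pow_mult. replace ((-1)^2) with 1 by ring. apply pow1. Qed.

Lemma B1 d s : (1 <= d)%nat ->
  poch ((2 - INR d)/2) s * poch ((1 - INR d)/2) s / (poch (1/2) s * INR (fact s)) = Cb (d-1) (2*s).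
Proof.
  intro Hd. set (x := 1 - INR d).
  replace ((2 - INR d)/2) with ((x+1)/2) by (unfold x; field).
  assert (H1 := poch_half x s). assert (H2 := poch_half 1 s).
  replace ((1+1)/2) with 1 in H2 by field. rewrite !poch_1 in H2.
  assert (H3 : poch x (2*s) = falling (INR (d-1)) (2*s)).
  { replace x with (- INR (d-1)) by (unfold x; rewrite minus_INR by lia; simpl; ring).
    rewrite poch_neg, pow_m1_even; ring. }
  unfold Cb. rewrite <- H3, <- H1, <- H2. field. split.
  - apply Rgt_not_eq, pow_lt; lra.
  - split; [apply not_0_INR, fact_neq_0|]. apply Rgt_not_eq, poch_pos; lra.
Qed.

Lemma B2 d s : (1 <= d)%nat ->
  INR (d-1) * (poch ((3 - INR d)/2) s * poch ((2 - INR d)/2) s / (poch (3/2) s * INR (fact s)))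
  = Cb (d-1) (2*s+1).
Proof.
  intro Hd. set (x := 2 - INR d).
  replace ((3 - INR d)/2) with ((x+1)/2) by (unfold x; field).
  assert (H1 := poch_half x s). assert (H2 := poch_half 2 s).
  replace (2/2) with 1 in H2 by field. replace ((2+1)/2) with (3/2) in H2 by field. rewrite poch_1, poch_2 in H2.
  assert (H3 : poch x (2*s) = falling (INR (d-1) - 1) (2*s)).
  { replace x with (- (INR (d-1) - 1)) by (unfold x; rewrite minus_INR by lia; simpl; ring).
    rewrite poch_neg, pow_m1_even; ring. }
  unfold Cb. replace (2*s+1)%nat with (S (2*s)) by lia. cbn [falling]. rewrite <- H3, <- H1, <- H2.
  field. split.
  - apply Rgt_not_eq, pow_lt; lra.
  - split; [apply Rgt_not_eq, poch_pos; lra|]. apply not_0_INR, fact_neq_0.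
Qed.

Definition R1 j n := GammaH (2*j-1) * GammaH (2*n-2) / (GammaH (2*n-1) * GammaH (2*j-2)).
Definition R2 j n := GammaH (2*j-1) * GammaH (2*n-3) / (GammaH (2*j-3) * GammaH (2*n-1)).

Lemma INR_2m N k : (k <= 2*N)%nat -> INR (2*N - k) = 2*INR N - INR k.
Proof. intro; rewrite minus_INR, mult_INR by lia; simpl; ring. Qed.

Lemma TT_odd j s : (2 <= j)%nat -> (s <= j - 2)%nat -> forall t,
  TT j (2*s+1) (j-1+t) = R1 j (j+t) * poch (2 - INR j) s / poch (2 - INR (j+t)) s.
Proof.
  intros Hj Hs.
  assert (Hnz : forall N, (j <= N)%nat -> poch (2 - INR N) s <> 0).
  { intros N HN. apply poch_nz. intros l Hl. assert (INR l + INR 3 <= INR N) by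
      (rewrite <- plus_INR; apply le_INR; lia). simpl (INR 3) in *. lra. }
  induction t.
  - rewrite !Nat.add_0_r, TT_early by lia. unfold R1. field. repeat split; try (apply Hnz; lia); try (apply GH_nz; lia).
  - rewrite (Nat.add_succ_r (j-1) t), TT_step, IHt by lia. rewrite (Nat.add_succ_r j t).
    set (N := (j+t)%nat). unfold R1.
    replace (2 * S N - 2)%nat with (S (S (2*N-2))) by lia.
    replace (2 * S N - 1)%nat with (S (S (2*N-1))) by lia.
    rewrite !GH_step by lia.
    replace (2 * (j - 1 + t) + 1)%nat with (2*N-1)%nat by lia.
    rewrite !INR_2m by lia. rewrite (S_INR N).
    replace (INR (2*s+1)) with (2*INR s + 1) by (rewrite plus_INR, mult_INR; simpl; ring).
    simpl (INR 1). simpl (INR 2).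
    replace (2 - (INR N + 1)) with (1 - INR N) by ring.
    assert (Hrel : poch (1 - INR N) s * (1 - INR N + INR s) = (1 - INR N) * poch (2 - INR N) s).
    { change (poch (1 - INR N) s * (1 - INR N + INR s)) with (poch (1 - INR N) (S s)).
      rewrite poch_S. replace (1 - INR N + 1) with (2 - INR N) by ring. reflexivity. }
    assert (HN : INR j <= INR N) by (apply le_INR; unfold N; lia).
    assert (Hs' : INR s + INR 2 <= INR j) by (rewrite <- plus_INR; apply le_INR; lia). simpl (INR 2) in Hs'.
    assert (Hq : poch (1 - INR N) s <> 0).
    { apply poch_nz. intros l Hl. assert (INR l + 1 <= INR s) by
        (rewrite <- S_INR; apply le_INR; lia). lra. }
    assert (Hp := Hnz N ltac:(unfold N; lia)). pose proof (pos_INR s).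
    assert (Hg1 := GH_nz (2*N-1) ltac:(lia)). assert (Hg2 := GH_nz (2*N-2) ltac:(lia)).
    assert (Hg3 := GH_nz (2*j-2) ltac:(lia)).
    assert (Hpp : poch (2 - INR N) s = poch (1 - INR N) s * (1 - INR N + INR s) / (1 - INR N))
      by (rewrite Hrel; field; lra).
    rewrite Hpp. field. repeat split; try lra; auto.
Qed.

Lemma half_nz N l : 5/2 - INR N + INR l <> 0.
Proof. intro H. assert (INR (2*N) = INR (2*l+5)) by (rewrite plus_INR, !mult_INR; simpl; lra).
  apply INR_eq in H0. lia. Qed.

Lemma TT_even j s : (2 <= j)%nat -> forall t,
  TT j (2*s+2) (j-1+t) = R2 j (j+t) * poch (5/2 - INR j) s / poch (5/2 - INR (j+t)) s.
Proof.
  intros Hj.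
  assert (Hnz : forall N, poch (5/2 - INR N) s <> 0).
  { intros N. apply poch_nz. intros l Hl. apply half_nz. }
  induction t.
  - rewrite !Nat.add_0_r, TT_early by lia. unfold R2. field.
    repeat split; try (apply Hnz; lia); try (apply GH_nz; lia).
  - rewrite (Nat.add_succ_r (j-1) t), TT_step, IHt by lia. rewrite (Nat.add_succ_r j t).
    set (N := (j+t)%nat). unfold R2.
    replace (2 * S N - 3)%nat with (S (S (2*N-3))) by lia.
    replace (2 * S N - 1)%nat with (S (S (2*N-1))) by lia.
    rewrite !GH_step by lia.
    replace (2 * (j - 1 + t) + 1)%nat with (2*N-1)%nat by lia.
    rewrite !INR_2m by lia. rewrite (S_INR N).
    replace (INR (2*s+2)) with (2*INR s + 2) by (rewrite plus_INR, mult_INR; simpl; ring).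
    simpl (INR 1). simpl (INR 3).
    replace (5/2 - (INR N + 1)) with (3/2 - INR N) by field.
    assert (Hrel : poch (3/2 - INR N) s * (3/2 - INR N + INR s) = (3/2 - INR N) * poch (5/2 - INR N) s).
    { change (poch (3/2 - INR N) s * (3/2 - INR N + INR s)) with (poch (3/2 - INR N) (S s)).
      rewrite poch_S. replace (3/2 - INR N + 1) with (5/2 - INR N) by field. reflexivity. }
    assert (HN : INR j <= INR N) by (apply le_INR; unfold N; lia).
    assert (Hj2 : INR 2 <= INR j) by (apply le_INR; lia). simpl (INR 2) in Hj2.
    assert (Hq : poch (3/2 - INR N) s <> 0).
    { apply poch_nz. intros l Hl. replace (3/2 - INR N + INR l) with (5/2 - INR (S N) + INR l)
        by (rewrite S_INR; field). apply half_nz. }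
    assert (Hp := Hnz N).
    assert (Hg1 := GH_nz (2*N-3) ltac:(lia)). assert (Hg2 := GH_nz (2*j-3) ltac:(lia)).
    assert (Hg3 := GH_nz (2*N-1) ltac:(lia)).
    assert (Hpp : poch (5/2 - INR N) s = poch (3/2 - INR N) s * (3/2 - INR N + INR s) / (3/2 - INR N))
      by (rewrite Hrel; field; lra).
    rewrite Hpp. field. repeat split; try lra; auto.
    all: intro Hc; apply (half_nz (S N) s); rewrite S_INR; lra.
Qed.

Lemma TT_zero j s m : (j - 1 <= s)%nat -> (s + 1 <= m)%nat -> TT j (2*s+1) m = 0.
Proof.
  induction m; intros H1 H2; [lia|]. rewrite TT_step by lia.
  destruct (Nat.eq_dec m s).
  - subst. rewrite Rdiv_diag by (apply not_0_INR; lia). ring.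
  - rewrite IHm by lia. ring.
Qed.

Lemma term_odd j n d s : (2 <= j)%nat -> (j <= n)%nat -> (1 <= d)%nat -> (d <= n - j + 1)%nat ->
  Cb (d-1) (2*s) * TT j (2*s+1) (n-1) = R1 j n *
  (poch ((2 - INR d)/2) s * poch ((1 - INR d)/2) s * poch (2 - INR j) s
     / (poch (1/2) s * poch (2 - INR n) s) * 1^s / INR (fact s)).
Proof.
  intros Hj Hn Hd1 Hd2.
  destruct (le_lt_dec s (j-2)) as [Hs|Hs].
  - replace (n-1)%nat with (j-1+(n-j))%nat by lia. rewrite TT_odd by lia.
    replace (j + (n-j))%nat with n by lia. rewrite <- (B1 d s Hd1). rewrite pow1.
    assert (poch (2 - INR n) s <> 0).
    { apply poch_nz. intros l Hl. assert (INR l + INR 3 <= INR n) by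
        (rewrite <- plus_INR; apply le_INR; lia). simpl (INR 3) in *. lra. }
    assert (0 < poch (1/2) s) by (apply poch_pos; lra).
    assert (0 < INR (fact s)) by apply INR_fact_lt_0.
    field. repeat split; auto; lra.
  - rewrite (poch_zero (2 - INR j) s (j-2)) by (try lia; rewrite minus_INR by lia; simpl; ring).
    match goal with |- _ = ?r => replace r with 0 by (unfold Rdiv; ring) end.
    destruct (le_lt_dec (2*s) (d-1)).
    + rewrite TT_zero by lia. ring.
    + rewrite Cb_zero by lia. ring.
Qed.

Lemma term_even j n d s : (2 <= j)%nat -> (j <= n)%nat -> (1 <= d)%nat ->
  Cb (d-1) (2*s+1) * TT j (2*s+2) (n-1) = INR (d-1) * R2 j n *
  (poch ((3 - INR d)/2) s * poch ((2 - INR d)/2) s * poch (5/2 - INR j) s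
     / (poch (3/2) s * poch (5/2 - INR n) s) * 1^s / INR (fact s)).
Proof.
  intros Hj Hn Hd1.
  replace (n-1)%nat with (j-1+(n-j))%nat by lia. rewrite TT_even by lia.
  replace (j + (n-j))%nat with n by lia. rewrite <- (B2 d s Hd1). rewrite pow1.
  assert (poch (5/2 - INR n) s <> 0) by (apply poch_nz; intros; apply half_nz).
  assert (0 < poch (3/2) s) by (apply poch_pos; lra).
  assert (0 < INR (fact s)) by apply INR_fact_lt_0.
  field. repeat split; auto; lra.
Qed.

Lemma sum_pair f N : sum_f_R0 f (2*N+1) = sum_f_R0 (fun s => f (2*s)%nat + f (2*s+1)%nat) N.
Proof.
  induction N; [simpl; reflexivity|].
  replace (2 * S N + 1)%nat with (S (S (2*N+1))) by lia. cbn [sum_f_R0]. rewrite IHN.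
  replace (S (2*N+1)) with (2 * S N)%nat by lia. replace (S (2 * S N)) with (2 * S N + 1)%nat by lia.
  ring.
Qed.

Lemma pow_m1_odd s : (-1)^(2*s+1) = -1.
Proof. rewrite pow_add, pow_m1_even. ring. Qed.

Lemma GH_rGH d : (1 <= d)%nat -> GammaH (2*d) * rGammaH (2*d-2) = INR (d-1).
Proof.
  intro Hd. destruct d as [|[|e]]; [lia| simpl; ring |].
  replace (2 * S (S e) - 2)%nat with (S (S (2*e))) by lia.
  replace (2 * S (S e))%nat with (S (S (S (S (2*e))))) by lia.
  rewrite GH_step by lia. unfold rGammaH. replace (S (S e) - 1)%nat with (S e) by lia.
  replace (INR (S (S (2*e)))) with (2 * INR (S e)) by
    (replace (S (S (2*e))) with (2 * S e)%nat by lia; rewrite mult_INR; simpl; ring).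
  field. apply GH_nz. lia.
Qed.

Theorem corollary3p1 (n j d : nat) :
  (2 <= j)%nat -> (j <= n)%nat -> (1 <= d)%nat -> (d <= n - j + 1)%nat ->
  prob_deg n j d =
    GammaH (2 * d) * GammaH (2 * j - 1) / GammaH (2 * n - 1) *
    ( GammaH (2 * n - 2)
        * F32 n ((2 - INR d) / 2) ((1 - INR d) / 2) (2 - INR j)
                (1 / 2) (2 - INR n) 1
        / (GammaH (2 * d) * GammaH (2 * j - 2))
      - GammaH (2 * n - 3)
        * F32 n ((3 - INR d) / 2) ((2 - INR d) / 2) (5 / 2 - INR j)
                (3 / 2) (5 / 2 - INR n) 1
        * rGammaH (2 * d - 2) / GammaH (2 * j - 3) ).
Proof.
  intros Hj Hn Hd1 Hd2.
  assert (HE : prob_deg n j d = E j (n-1) (ind d)).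
  { unfold prob_deg, E, rsum. f_equal. apply map_ext. intros [ps p]. simpl.
    unfold degree, ind. replace (Nat.eqb j 1) with false by (symmetry; apply Nat.eqb_neq; lia).
    rewrite Nat.add_1_r. destruct (Nat.eqb (S (children ps j)) d); ring. }
  rewrite HE. replace (n-1)%nat with (j-1+(n-j))%nat by lia.
  rewrite (claim j (2*n+1)) by lia. replace (j-1+(n-j))%nat with (n-1)%nat by lia.
  unfold Fm. rewrite sum_pair, sum_plus.
  set (F1 := F32 n _ _ _ _ _ 1). set (F2 := F32 n _ _ _ _ _ 1).
  assert (HF1 : sum_f_R0 (fun s => (-1)^(2*s) * Cb (d-1) (2*s) * TT j (S (2*s)) (n-1)) n = R1 j n * F1).
  { unfold F1, F32. rewrite scal_sum. apply sum_eq. intros s _.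
    rewrite pow_m1_even, Rmult_1_l. replace (S (2*s)) with (2*s+1)%nat by lia.
    rewrite term_odd by lia. ring. }
  assert (HF2 : sum_f_R0 (fun s => (-1)^(2*s+1) * Cb (d-1) (2*s+1) * TT j (S (2*s+1)) (n-1)) n
                = - (INR (d-1) * R2 j n) * F2).
  { unfold F2, F32. rewrite scal_sum. apply sum_eq. intros s _.
    rewrite pow_m1_odd. replace (S (2*s+1)) with (2*s+2)%nat by lia.
    replace (-1 * Cb (d-1) (2*s+1) * TT j (2*s+2) (n-1)) with (-(Cb (d-1) (2*s+1) * TT j (2*s+2) (n-1))) by ring.
    rewrite term_even by lia. ring. }
  rewrite HF1, HF2. rewrite <- (GH_rGH d Hd1).
  unfold R1, R2.
  pose proof (GH_nz (2*d) ltac:(lia)). pose proof (GH_nz (2*j-1) ltac:(lia)). pose proof (GH_nz (2*j-2) ltac:(lia)).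
  pose proof (GH_nz (2*j-3) ltac:(lia)). pose proof (GH_nz (2*n-1) ltac:(lia)).
  field. repeat split; auto.
Qed.
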